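(* Let $|\psi\rangle$ be a pure three-qubit state and let $i\neq j$, $i,j\in\{A,B,C\}$. If $\mathcal C_{ij}^2>\frac49$, then the reduced state $\rho_{ij}$ violates the three-settings CJWR linear steering inequality, i.e. $S_{ij}>1$.
   Context: For a two-qubit state $\rho$ let $t_{kl}=\mathrm{Tr}[\rho\,\sigma_k\otimes\sigma_l]$ ($\sigma_k$ Pauli matrices) and $S(\rho)=\sum_{k,l=1}^3 t_{kl}^2$; $\rho_{ij}$ is the two-qubit reduced state of qubits $i,j$ and $S_{ij}=S(\rho_{ij})$. $\mathcal C_{ij}$ is the Wootters concurrence of $\rho_{ij}$: $\mathcal C(\rho)=\max\{0,\lambda_1-\lambda_2-\lambda_3-\lambda_4\}$, with $\lambda_1\ge\dots\ge\lambda_4$ the square roots of the eigenvalues of $\rho(\sigma_2\otimes\sigma_2)\rho^*(\sigma_2\otimes\sigma_2)$. The three-settings CJWR inequality $\frac1{\sqrt3}|\sum_{k=1}^3\langle A_k\otimes B_k\rangle|\le1$ ($A_k=\hat a_k\cdot\vec\sigma$ with unit $\hat a_k$, $B_k=\hat b_k\cdot\vec\sigma$ with orthonormal $\hat b_k$) has maximum $\sqrt{S(\rho)}$ over settings, so it is violated iff $S(\rho)>1$. *)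

(* Defs.v *)
From HB Require Import structures.
From mathcomp Require Import all_boot all_order all_algebra.
From mathcomp Require Import complex.
Set Implicit Arguments. Unset Strict Implicit. Unset Printing Implicit Defensive.
Import Order.TTheory GRing.Theory Num.Theory.
Local Open Scope ring_scope.

Section Defs.
Variable R : rcfType.
Local Notation C := R[i].

(* Two-qubit index convention: e : 'I_4 encodes the basis state |a b>
   with a = e %/ 2 (first qubit) and b = e %% 2 (second qubit). *)
Definition qb1 (e : 'I_4) : 'I_2 := inord (e %/ 2).
Definition qb2 (e : 'I_4) : 'I_2 := inord (e %% 2).

Definition kron2 (A B : 'M[C]_2) : 'M[C]_4 :=
  \matrix_(e, f) (A (qb1 e) (qb1 f) * B (qb2 e) (qb2 f)).

(* Pauli matrices sigma_1, sigma_2, sigma_3 (k : 'I_3 stands for k+1). *)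
Definition pauli (k : 'I_3) : 'M[C]_2 :=
  \matrix_(a, b)
    (if val k == 0%N then (if a == b then 0 else 1)
     else if val k == 1%N then
       (if a == b then 0 else if val a == 0%N then - 'i else 'i)
     else (if a == b then (if val a == 0%N then 1 else -1) else 0)).

(* A pure three-qubit state: amplitudes psi x on computational basis states
   x : {ffun 'I_3 -> 'I_2} (x k = value of qubit k; qubits A,B,C = 0,1,2). *)
Definition three_qubit_state := {ffun 'I_3 -> 'I_2} -> C.

Definition normalized (psi : three_qubit_state) : Prop :=
  \sum_x `|psi x| ^+ 2 = 1.

(* Reduced state rho_ij = Tr_k |psi><psi| (k the remaining qubit), written
   in the basis |x_i x_j> of qubits i (first factor) and j (second factor). *)
Definition reduced (psi : three_qubit_state) (i j : 'I_3) : 'M[C]_4 :=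
  \matrix_(e, f)
    \sum_(x : {ffun 'I_3 -> 'I_2}) \sum_(y : {ffun 'I_3 -> 'I_2} | [&& x i == qb1 e, x j == qb2 e, y i == qb1 f,
                        y j == qb2 f &
                        [forall k, (k != i) && (k != j) ==> (x k == y k)]])
       psi x * (psi y)^*.

Definition tcorr (rho : 'M[C]_4) (k l : 'I_3) : C :=
  \tr (rho *m kron2 (pauli k) (pauli l)).

Definition Sval (rho : 'M[C]_4) : C := \sum_k \sum_l tcorr rho k l ^+ 2.

Definition sy2 : 'M[C]_4 := kron2 (pauli 1) (pauli 1).
Definition rho_tilde (rho : 'M[C]_4) : 'M[C]_4 :=
  sy2 *m map_mx (fun z : C => z^*) rho *m sy2.

(* eigenvalues (with multiplicity) of rho * rho_tilde: the roots of its
   characteristic polynomial, which splits over the closed field R[i] *)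
Definition wootters_eigs (rho : 'M[C]_4) : seq C :=
  sval (closed_field_poly_normal (char_poly (rho *m rho_tilde rho))).

(* lambda_1 >= ... >= lambda_4: square roots of these eigenvalues
   (they are real and nonnegative; we take real parts to land in R). *)
Definition wootters_lambdas (rho : 'M[C]_4) : seq R :=
  sort (fun a b : R => b <= a)
       [seq complex.Re (sqrtC z) | z <- wootters_eigs rho].

Definition concurrence (rho : 'M[C]_4) : R :=
  let l := wootters_lambdas rho in
  Num.max 0 (l`_0 - l`_1 - l`_2 - l`_3).

End Defs.

(* Main.v *)
Require Import Defs.
From HB Require Import structures.
From mathcomp Require Import all_boot all_order all_algebra.
From mathcomp Require Import complex ring lra.
Import Order.TTheory GRing.Theory Num.Theory.
Set Implicit Arguments. Unset Strict Implicit. Unset Printing Implicit Defensive.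
Local Open Scope complex_scope.
Local Open Scope ring_scope.

Definition enc (a b : 'I_2) : 'I_4 := inord (a * 2 + b).
Lemma qb1_enc a b : qb1 (enc a b) = a.
Proof. apply/val_inj; rewrite /qb1 /enc; case: a => [[|[|//]] Ha]; case: b => [[|[|//]] Hb];
  by rewrite /= !inordK. Qed.
Lemma qb2_enc a b : qb2 (enc a b) = b.
Proof. apply/val_inj; rewrite /qb2 /enc; case: a => [[|[|//]] Ha]; case: b => [[|[|//]] Hb];
  by rewrite /= !inordK. Qed.
Lemma enc_qb e : enc (qb1 e) (qb2 e) = e.
Proof. apply/val_inj; rewrite /qb1 /qb2 /enc; case: e => [[|[|[|[|//]]]] He];
  by rewrite /= !inordK. Qed.
Definition third (i j : 'I_3) : 'I_3 := inord (3 - i - j).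
Lemma third_prop (i j : 'I_3) : i != j ->
  [/\ third i j != i, third i j != j & forall m, [|| m == i, m == j | m == third i j]].
Proof.
rewrite /third.
case: i => [[|[|[|//]]] Hi]; case: j => [[|[|[|//]]] Hj] //= _;
 (split; [ by rewrite -val_eqE /= inordK | by rewrite -val_eqE /= inordK |
  case => [[|[|[|//]]] Hm]; by rewrite -!val_eqE /= ?inordK ]).
Qed.
Definition mk (i j : 'I_3) (e : 'I_4) (k : 'I_2) : {ffun 'I_3 -> 'I_2} :=
  [ffun m => if m == i then qb1 e else if m == j then qb2 e else k].

Lemma sum_ffun (V : nmodType) (i j : 'I_3) (hij : i != j) (F : {ffun 'I_3 -> 'I_2} -> V) :
  \sum_x F x = \sum_(k : 'I_2) \sum_(e : 'I_4) F (mk i j e k).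
Proof.
have [h1 h2 h3] := third_prop hij.
rewrite pair_big /=.
rewrite (reindex (fun p : 'I_2 * 'I_4 => mk i j p.2 p.1)) //.
exists (fun x : {ffun 'I_3 -> 'I_2} => (x (third i j), enc (x i) (x j))).
- case=> k e _ /=; rewrite /mk !ffunE eqxx (negbTE h1) (negbTE h2) eq_sym (negbTE hij) eqxx.
  by rewrite enc_qb.
- move=> x _; apply/ffunP => m; rewrite /mk ffunE /=.
  case: (eqVneq m i) => [->|ni]; first by rewrite qb1_enc.
  case: (eqVneq m j) => [->|nj]; first by rewrite qb2_enc.
  by move: (h3 m); rewrite (negbTE ni) (negbTE nj) /= => /eqP ->.
Qed.
Section Red.
Variable R : rcfType.
Local Notation C := R[i].
Variables (psi : three_qubit_state R) (i j : 'I_3).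
Hypothesis hij : i != j.

Definition uu (e : 'I_4) : C := psi (mk i j e ord0).
Definition vv (e : 'I_4) : C := psi (mk i j e ord_max).

Lemma mk_eq e k e' k' : (mk i j e k == mk i j e' k') = (e == e') && (k == k').
Proof.
have [h1 h2 h3] := third_prop hij.
have hji : (j == i) = false by rewrite eq_sym (negbTE hij).
apply/eqP/andP => [H|[/eqP -> /eqP ->]] //.
have Hi := congr1 (fun x : {ffun _ -> _} => x i) H.
have Hj := congr1 (fun x : {ffun _ -> _} => x j) H.
have Hk := congr1 (fun x : {ffun _ -> _} => x (third i j)) H.
move: Hi Hj Hk; rewrite /mk !ffunE eqxx (negbTE h1) (negbTE h2) hji eqxx.
move=> Hi Hj ->; split => //.
by rewrite -(enc_qb e) -(enc_qb e') Hi Hj.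
Qed.

Lemma cond_mk e f e' k f' k' :
  [&& mk i j e' k i == qb1 e, mk i j e' k j == qb2 e, mk i j f' k' i == qb1 f,
      mk i j f' k' j == qb2 f &
      [forall m, (m != i) && (m != j) ==> (mk i j e' k m == mk i j f' k' m)]]
  = [&& e' == e, k == k' & f' == f].
Proof.
have [h1 h2 h3] := third_prop hij.
have hji : (j == i) = false by rewrite eq_sym (negbTE hij).
have E1 : forall a b, ((qb1 a == qb1 b) && (qb2 a == qb2 b)) = (a == b).
  move=> a b; apply/andP/eqP => [[/eqP A /eqP B]|->] //.
  by rewrite -(enc_qb b) -(enc_qb a) A B.
have E2 : [forall m, (m != i) && (m != j) ==> (mk i j e' k m == mk i j f' k' m)] = (k == k').
  apply/forallP/idP => [/(_ (third i j))|/eqP-> m].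
    by rewrite h1 h2 /mk !ffunE (negbTE h1) (negbTE h2).
  rewrite /mk !ffunE; by case: (m == i); case: (m == j); rewrite /= ?eqxx.
rewrite E2 /mk !ffunE eqxx hji eqxx.
rewrite -E1 -(E1 f').
by case: (qb1 e' == qb1 e); case: (qb2 e' == qb2 e); case: (k == k'); case: (qb1 f' == qb1 f); case: (qb2 f' == qb2 f).
Qed.

Lemma reduced_uv : reduced psi i j =
  \matrix_(e, f) (uu e * (uu f)^* + vv e * (vv f)^*).
Proof.
apply/matrixP => e f; rewrite !mxE.
transitivity (\sum_(k : 'I_2) psi (mk i j e k) * (psi (mk i j f k))^*); last first.
  rewrite big_ord_recr big_ord1 /uu /vv.
  by have -> : widen_ord (leqnSn 1) ord0 = ord0 :> 'I_2 by apply/val_inj.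
rewrite (sum_ffun hij); apply: eq_bigr => k _.
rewrite (bigD1 e) //= [X in _ + X]big1 ?addr0 => [|e' ne].
  rewrite big_mkcond (sum_ffun hij) (bigD1 k) //= [X in _ + X]big1 ?addr0 => [|k' nk].
    rewrite (bigD1 f) //= [X in _ + X]big1 ?addr0 => [|f' nf].
      by rewrite cond_mk !eqxx.
    by rewrite cond_mk (negbTE nf) !andbF.
  rewrite big1 // => f' _.
  by rewrite cond_mk eq_sym (negbTE nk) andbF.
rewrite big_mkcond (sum_ffun hij) big1 // => k' _; rewrite big1 // => f' _.
by rewrite cond_mk (negbTE ne).
Qed.

Lemma normalized_uv : normalized psi ->
  \sum_e (`|uu e| ^+ 2 + `|vv e| ^+ 2) = 1.
Proof.
rewrite /normalized (sum_ffun hij) big_ord_recr big_ord1 /= -big_split /=.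
by have -> : widen_ord (leqnSn 1) ord0 = ord0 :> 'I_2 by apply/val_inj.
Qed.
End Red.

Definition o0 : 'I_4 := @Ordinal 4 0 isT.
Definition o1 : 'I_4 := @Ordinal 4 1 isT.
Definition o2 : 'I_4 := @Ordinal 4 2 isT.
Definition o3 : 'I_4 := @Ordinal 4 3 isT.
Definition b0 : 'I_2 := @Ordinal 2 0 isT.
Definition b1 : 'I_2 := @Ordinal 2 1 isT.
Definition k0 : 'I_3 := @Ordinal 3 0 isT.
Definition k1 : 'I_3 := @Ordinal 3 1 isT.
Definition k2 : 'I_3 := @Ordinal 3 2 isT.

Lemma sum4 (V : nmodType) (F : 'I_4 -> V) : \sum_e F e = F o0 + F o1 + F o2 + F o3.
Proof.
rewrite !big_ord_recr big_ord0 /= add0r.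
by congr (_ + _ + _ + _); apply/congr1/val_inj.
Qed.
Lemma sum3 (V : nmodType) (F : 'I_3 -> V) : \sum_e F e = F k0 + F k1 + F k2.
Proof.
rewrite !big_ord_recr big_ord0 /= add0r.
by congr (_ + _ + _); apply/congr1/val_inj.
Qed.
Lemma sum2 (V : nmodType) (F : 'I_2 -> V) : \sum_e F e = F b0 + F b1.
Proof.
rewrite !big_ord_recr big_ord0 /= add0r.
by congr (_ + _); apply/congr1/val_inj.
Qed.

Lemma qb1_0 : qb1 o0 = b0. Proof. by apply/val_inj; rewrite /= inordK. Qed.
Lemma qb1_1 : qb1 o1 = b0. Proof. by apply/val_inj; rewrite /= inordK. Qed.
Lemma qb1_2 : qb1 o2 = b1. Proof. by apply/val_inj; rewrite /= inordK. Qed.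
Lemma qb1_3 : qb1 o3 = b1. Proof. by apply/val_inj; rewrite /= inordK. Qed.
Lemma qb2_0 : qb2 o0 = b0. Proof. by apply/val_inj; rewrite /= inordK. Qed.
Lemma qb2_1 : qb2 o1 = b1. Proof. by apply/val_inj; rewrite /= inordK. Qed.
Lemma qb2_2 : qb2 o2 = b0. Proof. by apply/val_inj; rewrite /= inordK. Qed.
Lemma qb2_3 : qb2 o3 = b1. Proof. by apply/val_inj; rewrite /= inordK. Qed.
Definition qbE := (qb1_0, qb1_1, qb1_2, qb1_3, qb2_0, qb2_1, qb2_2, qb2_3).

Section Alg.
Variable R : rcfType.
Local Notation C := R[i].

Definition tau (k : 'I_3) : 'M[C]_2 :=
  \matrix_(a, b)
    (if val k == 0%N then (if a == b then 0 else 1)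
     else if val k == 1%N then
       (if a == b then 0 else if val a == 0%N then -1 else 1)
     else (if a == b then (if val a == 0%N then 1 else -1) else 0)).
Definition cc (k : 'I_3) : C := if val k == 1%N then 'i else 1.

Lemma pauli_tau k : pauli R k = cc k *: tau k.
Proof.
apply/matrixP => a b; rewrite !mxE /cc.
by case: k => [[|[|[|//]]] Hk] /=; case: (a == b); case: (val a == 0%N);
  rewrite ?mulr0 ?mul1r ?mulrN1 ?mulr1.
Qed.

Lemma kron2Z a b (A B : 'M[C]_2) : kron2 (a *: A) (b *: B) = (a * b) *: kron2 A B.
Proof. apply/matrixP => e f; rewrite !mxE; ring. Qed.

Definition tc (rho : 'M[C]_4) k l := \tr (rho *m kron2 (tau k) (tau l)).
Definition sg (k : 'I_3) : C := if val k == 1%N then -1 else 1.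

Lemma Sval_tc rho : Sval rho = \sum_k \sum_l sg k * sg l * tc rho k l ^+ 2.
Proof.
apply: eq_bigr => k _; apply: eq_bigr => l _.
rewrite /tcorr !pauli_tau kron2Z -scalemxAr mxtraceZ /tc /sg /cc.
rewrite exprMn exprMn.
by case: (val k == 1%N); case: (val l == 1%N); rewrite ?sqrCi ?expr1n; ring.
Qed.

Definition beta (a b : 'I_4 -> C) : C := - a o0 * b o3 + a o1 * b o2 + a o2 * b o1 - a o3 * b o0.

Lemma tc_00 rho : tc rho k0 k0 = rho o0 o3 + rho o1 o2 + rho o2 o1 + rho o3 o0.
Proof. by rewrite /tc /mxtrace !sum4 !mxE !sum4 !mxE !qbE /=; ring. Qed.
Lemma tc_01 rho : tc rho k0 k1 = rho o0 o3 - rho o1 o2 + rho o2 o1 - rho o3 o0.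
Proof. by rewrite /tc /mxtrace !sum4 !mxE !sum4 !mxE !qbE /=; ring. Qed.
Lemma tc_02 rho : tc rho k0 k2 = rho o0 o2 - rho o1 o3 + rho o2 o0 - rho o3 o1.
Proof. by rewrite /tc /mxtrace !sum4 !mxE !sum4 !mxE !qbE /=; ring. Qed.
Lemma tc_10 rho : tc rho k1 k0 = rho o0 o3 + rho o1 o2 - rho o2 o1 - rho o3 o0.
Proof. by rewrite /tc /mxtrace !sum4 !mxE !sum4 !mxE !qbE /=; ring. Qed.
Lemma tc_11 rho : tc rho k1 k1 = rho o0 o3 - rho o1 o2 - rho o2 o1 + rho o3 o0.
Proof. by rewrite /tc /mxtrace !sum4 !mxE !sum4 !mxE !qbE /=; ring. Qed.
Lemma tc_12 rho : tc rho k1 k2 = rho o0 o2 - rho o1 o3 - rho o2 o0 + rho o3 o1.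
Proof. by rewrite /tc /mxtrace !sum4 !mxE !sum4 !mxE !qbE /=; ring. Qed.
Lemma tc_20 rho : tc rho k2 k0 = rho o0 o1 + rho o1 o0 - rho o2 o3 - rho o3 o2.
Proof. by rewrite /tc /mxtrace !sum4 !mxE !sum4 !mxE !qbE /=; ring. Qed.
Lemma tc_21 rho : tc rho k2 k1 = rho o0 o1 - rho o1 o0 - rho o2 o3 + rho o3 o2.
Proof. by rewrite /tc /mxtrace !sum4 !mxE !sum4 !mxE !qbE /=; ring. Qed.
Lemma tc_22 rho : tc rho k2 k2 = rho o0 o0 - rho o1 o1 - rho o2 o2 + rho o3 o3.
Proof. by rewrite /tc /mxtrace !sum4 !mxE !sum4 !mxE !qbE /=; ring. Qed.

Lemma Sval_gen (u ub v vb : 'I_4 -> C) :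
  Sval (\matrix_(e, f) (u e * ub f + v e * vb f)) =
  (\sum_e (u e * ub e + v e * vb e)) ^+ 2
  + 2 * (beta u u * beta ub ub + 2 * (beta u v * beta ub vb) + beta v v * beta vb vb)
  - 4 * ((\sum_e u e * ub e) * (\sum_e v e * vb e) - (\sum_e u e * vb e) * (\sum_e ub e * v e)).
Proof.
rewrite Sval_tc !sum3 tc_00 tc_01 tc_02 tc_10 tc_11 tc_12 tc_20 tc_21 tc_22 !mxE /sg /beta /=.
rewrite !sum4.
ring.
Qed.
End Alg.

Lemma det2 (F : comPzRingType) (A : 'M[F]_2) :
  \det A = A b0 b0 * A b1 b1 - A b0 b1 * A b1 b0.
Proof.
rewrite (expand_det_row _ b0) sum2 /cofactor !det_mx11 !mxE /=.
have -> : lift b0 (0 : 'I_1) = b1 by apply/val_inj.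
have -> : lift b1 (0 : 'I_1) = b0 by apply/val_inj.
rewrite expr0 expr1; ring.
Qed.

Section M.
Variable R : rcfType.
Local Notation C := R[i].
Lemma cjD (a b : C) : (a + b)^* = a^* + b^*. Proof. exact: rmorphD. Qed.
Lemma cjB (a b : C) : (a - b)^* = a^* - b^*. Proof. exact: rmorphB. Qed.
Lemma cjM (a b : C) : (a * b)^* = a^* * b^*. Proof. exact: rmorphM. Qed.
Lemma cjN (a : C) : (- a)^* = - a^*. Proof. exact: rmorphN. Qed.
Lemma one3 : (1 : 'I_3) = k1. Proof. by apply/val_inj. Qed.
Lemma sy2E : sy2 R = - kron2 (tau R k1) (tau R k1).
Proof.
by rewrite /sy2 one3 pauli_tau kron2Z /cc /= -expr2 sqrCi scaleN1r.
Qed.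

Variables u v : 'I_4 -> C.
Definition Wm : 'M[C]_(4, 2) := \matrix_(e, k) (if val k == 0%N then u e else v e).
Definition Wd : 'M[C]_(2, 4) := \matrix_(k, e) (Wm e k)^*.
Definition Wc : 'M[C]_(4, 2) := \matrix_(e, k) (Wm e k)^*.
Definition rho : 'M[C]_4 := \matrix_(e, f) (u e * (u f)^* + v e * (v f)^*).

Lemma rhoW : rho = Wm *m Wd.
Proof. by apply/matrixP => e f; rewrite !mxE sum2 !mxE. Qed.

Lemma rhoc : map_mx (fun z : C => z^*) rho = Wc *m Wm^T.
Proof.
apply/matrixP => e f; rewrite !mxE sum2 !mxE /=.
by rewrite cjD !cjM !conjCK.
Qed.

Definition Mm := Wd *m sy2 R *m Wc *m Wm^T *m sy2 R.
Definition Nm := Mm *m Wm.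

Lemma rrt : rho *m rho_tilde rho = Wm *m Mm.
Proof. by rewrite /rho_tilde rhoc {1}rhoW /Mm !mulmxA. Qed.

Definition k11 := beta u u.
Definition k12 := beta u v.
Definition k22 := beta v v.

Lemma NmE : Nm = (Wd *m sy2 R *m Wc) *m (Wm^T *m sy2 R *m Wm).
Proof. by rewrite /Nm /Mm !mulmxA. Qed.

Lemma KE a b : (Wm^T *m sy2 R *m Wm) a b =
  if val a == 0%N then (if val b == 0%N then k11 else k12)
  else (if val b == 0%N then k12 else k22).
Proof.
rewrite sy2E /k11 /k12 /k22 /beta.
case: a => [[|[|//]] Ha]; case: b => [[|[|//]] Hb];
rewrite !mxE !sum4 !mxE !sum4 !mxE !qbE /=; ring.
Qed.

Lemma KbE a b : (Wd *m sy2 R *m Wc) a b =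
  if val a == 0%N then (if val b == 0%N then k11^* else k12^*)
  else (if val b == 0%N then k12^* else k22^*).
Proof.
rewrite sy2E /k11 /k12 /k22 /beta.
case: a => [[|[|//]] Ha]; case: b => [[|[|//]] Hb];
rewrite !mxE !sum4 !mxE !sum4 !mxE !qbE /= ?cjB ?cjD ?cjN ?cjM; ring.
Qed.
End M.

Section M2.
Variable R : rcfType.
Local Notation C := R[i].

Definition n2 (z : C) : R := locked (complex.Re z ^+ 2 + complex.Im z ^+ 2).
Definition nr (z : C) : R := Num.sqrt (n2 z).
Lemma rcD (a b : R) : (a + b)%:C = a%:C + b%:C :> C. Proof. exact: rmorphD. Qed.
Lemma rcB (a b : R) : (a - b)%:C = a%:C - b%:C :> C. Proof. exact: rmorphB. Qed.
Lemma rcM (a b : R) : (a * b)%:C = a%:C * b%:C :> C. Proof. exact: rmorphM. Qed.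
Lemma rcN (a : R) : (- a)%:C = - a%:C :> C. Proof. exact: rmorphN. Qed.
Lemma rcX (a : R) n : (a ^+ n)%:C = a%:C ^+ n :> C. Proof. exact: rmorphXn. Qed.
Lemma rc1 : (1 : R)%:C = 1 :> C. Proof. by []. Qed.
Lemma rcn n : (n%:R : R)%:C = n%:R :> C. Proof. exact: rmorph_nat. Qed.
Lemma cjX (a : C) n : (a ^+ n)^* = a^* ^+ n. Proof. exact: rmorphXn. Qed.
Lemma conjR (a : R) : (a%:C)^* = a%:C :> C. Proof. exact: conjc_real. Qed.
Lemma n2C z : (n2 z)%:C = z * z^*.
Proof. by rewrite /n2 -lock add_Re2_Im2 sqr_normc. Qed.
Lemma n2_ge0 z : 0 <= n2 z. Proof. by rewrite /n2 -lock addr_ge0 ?sqr_ge0. Qed.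
Lemma nr_ge0 z : 0 <= nr z. Proof. exact: sqrtr_ge0. Qed.
Lemma n2_nr z : n2 z = nr z ^+ 2. Proof. by rewrite /nr sqr_sqrtr // n2_ge0. Qed.
Lemma normE z : `|z| = (nr z)%:C. Proof. by rewrite normc_def /nr /n2 -lock. Qed.
Lemma n2J z : n2 z^* = n2 z.
Proof. apply: complexI; by rewrite !n2C conjCK mulrC. Qed.
Lemma n2N z : n2 (- z) = n2 z.
Proof. apply: complexI; rewrite !n2C cjN; ring. Qed.

Variables u v : 'I_4 -> C.
Local Notation k11 := (k11 u).
Local Notation k12 := (k12 u v).
Local Notation k22 := (k22 v).
Local Notation Nm := (Nm u v).

Lemma NmE2 a b : Nm a b = \sum_c (Wd u v *m sy2 R *m Wc u v) a c * ((Wm u v)^T *m sy2 R *m Wm u v) c b.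
Proof. by rewrite NmE mxE. Qed.

Lemma N00 : Nm b0 b0 = k11^* * k11 + k12^* * k12.
Proof. by rewrite NmE2 sum2 !KE !KbE. Qed.
Lemma N01 : Nm b0 b1 = k11^* * k12 + k12^* * k22.
Proof. by rewrite NmE2 sum2 !KE !KbE. Qed.
Lemma N10 : Nm b1 b0 = k12^* * k11 + k22^* * k12.
Proof. by rewrite NmE2 sum2 !KE !KbE. Qed.
Lemma N11 : Nm b1 b1 = k12^* * k12 + k22^* * k22.
Proof. by rewrite NmE2 sum2 !KE !KbE. Qed.

Lemma cpN : char_poly Nm =
  ('X - (Nm b0 b0)%:P) * ('X - (Nm b1 b1)%:P) - (Nm b0 b1)%:P * (Nm b1 b0)%:P.
Proof.
rewrite /char_poly det2 /char_poly_mx !mxE /=.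
rewrite !mulr1n !mulr0n !sub0r; ring.
Qed.

Lemma cp_fact (m1 m2 : C) :
  Nm b0 b0 + Nm b1 b1 = m1 + m2 ->
  Nm b0 b0 * Nm b1 b1 - Nm b0 b1 * Nm b1 b0 = m1 * m2 ->
  char_poly Nm = ('X - m1%:P) * ('X - m2%:P).
Proof.
move=> Ht Hd; rewrite cpN.
have E1 : Nm b1 b1 = m1 + m2 - Nm b0 b0 by rewrite -Ht; ring.
have E2 : Nm b0 b1 * Nm b1 b0 = Nm b0 b0 * Nm b1 b1 - m1 * m2 by rewrite -Hd; ring.
rewrite -polyCM E2 E1 !rmorphB !rmorphM !rmorphD ?rmorphN /=; ring.
Qed.

Definition xx : R := n2 k11 + 2 * n2 k12 + n2 k22.
Definition dd : R := n2 (k11 * k22 - k12 ^+ 2).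

Lemma trN : Nm b0 b0 + Nm b1 b1 = xx%:C.
Proof. rewrite N00 N11 /xx rcD rcD rcM !n2C rcn; ring. Qed.
Lemma detN : Nm b0 b0 * Nm b1 b1 - Nm b0 b1 * Nm b1 b0 = dd%:C.
Proof.
have E : (k11 * k22 - k12 ^+ 2)^* = k11^* * k22^* - k12^* ^+ 2.
  by rewrite [LHS]cjB cjX cjM.
rewrite N00 N11 N01 N10 /dd n2C E; ring.
Qed.

Lemma xx_ge0 : 0 <= xx.
Proof. rewrite /xx; apply: addr_ge0; [apply: addr_ge0|]; rewrite ?mulr_ge0 ?n2_ge0 //. Qed.
Lemma dd_ge0 : 0 <= dd. Proof. exact: n2_ge0. Qed.

Lemma xx_dd : 4 * dd <= xx ^+ 2.
Proof.
have H : nr (k11 * k22 - k12 ^+ 2) <= nr k11 * nr k22 + nr k12 ^+ 2.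
  rewrite -lecR rcD rcM rcX -!normE.
  by rewrite (le_trans (ler_normB _ _)) // normrM normrX.
rewrite /dd /xx !n2_nr.
have := nr_ge0 (k11 * k22 - k12 ^+ 2); have := nr_ge0 k11; have := nr_ge0 k12; have := nr_ge0 k22.
move: H; set A := nr k11; set B := nr k12; set D := nr k22; set E := nr _ => H hD hB hA hE.
have H2 : A * D + B ^+ 2 <= (A ^+ 2 + 2 * B ^+ 2 + D ^+ 2) / 2.
  have := sqr_ge0 (A - D); lra.
nra.
Qed.
End M2.

Lemma char_poly_mulC (F : fieldType) (n m : nat) (A : 'M[F]_(n, m)) (B : 'M[F]_(m, n)) :
  'X ^+ m * char_poly (A *m B) = 'X ^+ n * char_poly (B *m A).
Proof.
pose P := map_mx (@polyC F).
pose Mb : 'M[{poly F}]_(n + m) := block_mx ('X%:M) (P _ _ A) (P _ _ B) 1%:M.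
pose L1 : 'M[{poly F}]_(n + m) := block_mx 1%:M 0 (- P _ _ B) 1%:M.
pose L2 : 'M[{poly F}]_(n + m) := block_mx 1%:M 0 (- P _ _ B) ('X%:M).
have E1 : Mb *m L1 = block_mx (char_poly_mx (A *m B)) (P _ _ A) 0 1%:M.
  rewrite /Mb /L1 mulmx_block !mulmx1 !mulmx0 !mul1mx mulmxN !add0r addrN.
  by rewrite /char_poly_mx map_mxM.
have E2 : L2 *m Mb = block_mx ('X%:M) (P _ _ A) 0 (char_poly_mx (B *m A)).
  rewrite /Mb /L2 mulmx_block !mul0mx !mul1mx mulmx1 !addr0 mulNmx.
  rewrite mul_scalar_mx mul_mx_scalar addNr addrC.
  by rewrite /char_poly_mx map_mxM mulNmx.
have := congr1 determinant E1; have := congr1 determinant E2.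
rewrite !det_mulmx /L1 /L2 !det_lblock !det_ublock !det1 !det_scalar !mul1r !mulr1.
rewrite /char_poly => <- <-; by rewrite mulrC.
Qed.

Section M3.
Variable R : rcfType.
Local Notation C := R[i].
Variables u v : 'I_4 -> C.
Local Notation xx := (xx u v).
Local Notation dd := (dd u v).

Definition sD : R := Num.sqrt (xx ^+ 2 - 4 * dd).
Definition mu1 : R := (xx + sD) / 2.
Definition mu2 : R := (xx - sD) / 2.

Lemma sD_ge0 : 0 <= sD. Proof. exact: sqrtr_ge0. Qed.
Lemma sD_sq : sD ^+ 2 = xx ^+ 2 - 4 * dd.
Proof. by rewrite /sD sqr_sqrtr // subr_ge0 xx_dd. Qed.
Lemma sD_le : sD <= xx.
Proof.
have h1 := sD_ge0; have h2 := sD_sq; have h3 := xx_ge0 u v; have h4 := dd_ge0 u v.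
nra.
Qed.
Lemma mu2_ge0 : 0 <= mu2. Proof. have := sD_le; rewrite /mu2; lra. Qed.
Lemma mu12 : mu2 <= mu1. Proof. have := sD_ge0; rewrite /mu1 /mu2; lra. Qed.
Lemma mu1_ge0 : 0 <= mu1. Proof. have := mu2_ge0; have := mu12; lra. Qed.
Lemma mu_sum : mu1 + mu2 = xx. Proof. rewrite /mu1 /mu2; lra. Qed.
Lemma mu_prod : mu1 * mu2 = dd.
Proof. have := sD_sq; rewrite /mu1 /mu2 => h; nra. Qed.

Lemma cpN_fact : char_poly (Nm u v) = ('X - (mu1%:C)%:P) * ('X - (mu2%:C)%:P).
Proof.
apply: cp_fact; first by rewrite trN -mu_sum rcD.
by rewrite detN -mu_prod rcM.
Qed.

Lemma cp_rrt : char_poly (rho u v *m rho_tilde (rho u v)) = 'X ^+ 2 * char_poly (Nm u v).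
Proof.
rewrite rrt.
have H := char_poly_mulC (Wm u v) (Mm u v).
have nz : ('X ^+ 2 : {poly C}) != 0 by rewrite expf_neq0 // polyX_eq0.
apply: (mulfI nz); rewrite H /Nm mulrA -exprD.
by [].
Qed.

Lemma eigs_perm : perm_eq (wootters_eigs (rho u v)) [:: 0; 0; mu1%:C; mu2%:C].
Proof.
rewrite /wootters_eigs; case: closed_field_poly_normal => s /= Hs.
rewrite (monicP (char_poly_monic _)) scale1r in Hs.
apply: prod_XsubC_eq; rewrite -Hs cp_rrt cpN_fact !big_cons big_nil.
by rewrite polyC0 subr0 mulr1 expr2 !mulrA.
Qed.
End M3.

Section M4.
Variable R : rcfType.
Local Notation C := R[i].
Variables u v : 'I_4 -> C.

Lemma sqrtC_rc (a : R) : 0 <= a -> sqrtC (a%:C : C) = (Num.sqrt a)%:C.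
Proof.
move=> ha; rewrite -{1}(sqr_sqrtr ha) rcX sqrCK //.
by rewrite ler0c sqrtr_ge0.
Qed.

Lemma lambdas_eq : wootters_lambdas (rho u v) =
  [:: Num.sqrt (mu1 u v); Num.sqrt (mu2 u v); 0; 0].
Proof.
rewrite /wootters_lambdas.
set le' := fun a b : R => b <= a.
have tr : transitive le' by move=> b a c h1 h2; rewrite /le' (le_trans h2 h1).
have an : antisymmetric le' by move=> a b /andP [h1 h2]; apply/le_anti; rewrite /le' in h1 h2; rewrite h1 h2.
have to : total le' by move=> a b; rewrite /le' le_total.
apply: (sorted_eq tr an).
- exact: sort_sorted.
- rewrite /= /le' !sqrtr_ge0 lexx andbT /=.
  by rewrite andbT ler_sqrt ?mu12 ?mu1_ge0.
rewrite perm_sort.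
have P1 := perm_map (fun z : C => complex.Re (sqrtC z)) (eigs_perm u v).
apply: (perm_trans P1).
rewrite /= sqrtC0 !sqrtC_rc ?mu1_ge0 ?mu2_ge0 //=.
set a := Num.sqrt _; set b := Num.sqrt _.
have -> : [:: a; b; 0; 0] = rot 2 [:: 0; 0; a; b] by [].
by rewrite perm_sym perm_rot.
Qed.

Lemma conc_eq : concurrence (rho u v) =
  Num.max 0 (Num.sqrt (mu1 u v) - Num.sqrt (mu2 u v)).
Proof. by rewrite /concurrence lambdas_eq /= !subr0. Qed.
End M4.

Section M5.
Variable R : rcfType.
Local Notation C := R[i].

Lemma rcS (F : 'I_4 -> R) : (\sum_e F e)%:C = \sum_e (F e)%:C :> C.
Proof. exact: rmorph_sum. Qed.
Lemma cjS (F : 'I_4 -> C) : (\sum_e F e)^* = \sum_e (F e)^*.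
Proof. exact: rmorph_sum. Qed.
Lemma rcI (a b : R) : (a%:C = b%:C :> C) -> a = b. Proof. exact: complexI. Qed.
Lemma n2R (a : R) : n2 (a%:C : C) = a ^+ 2.
Proof. by rewrite /n2 -lock /= expr0n /= addr0. Qed.

Lemma betaJ (a b : 'I_4 -> C) : (beta a b)^* = beta (fun e => (a e)^*) (fun e => (b e)^*).
Proof. by rewrite /beta !(cjB, cjD, cjN, cjM). Qed.


Lemma CS (p q : 'I_4 -> C) :
  n2 (\sum_e p e * q e) <= (\sum_e n2 (p e)) * (\sum_e n2 (q e)).
Proof.
rewrite -subr_ge0.
have -> : (\sum_e n2 (p e)) * (\sum_e n2 (q e)) - n2 (\sum_e p e * q e) =
  n2 (p o0 * (q o1)^* - p o1 * (q o0)^*) + n2 (p o0 * (q o2)^* - p o2 * (q o0)^*) +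
  n2 (p o0 * (q o3)^* - p o3 * (q o0)^*) + n2 (p o1 * (q o2)^* - p o2 * (q o1)^*) +
  n2 (p o1 * (q o3)^* - p o3 * (q o1)^*) + n2 (p o2 * (q o3)^* - p o3 * (q o2)^*).
  apply: rcI; rewrite !sum4 !(rcD, rcB, rcM, rcN) !n2C !(cjD, cjB, cjM, cjN) !conjCK; ring.
by repeat apply: addr_ge0; apply: n2_ge0.
Qed.

Variables u v : 'I_4 -> C.
Definition nu : R := \sum_e n2 (u e).
Definition nv : R := \sum_e n2 (v e).
Definition zz : C := \sum_e u e * (v e)^*.
Definition gg : R := nu * nv - n2 zz.

Lemma nu_ge0 : 0 <= nu. Proof. by apply: sumr_ge0 => e _; apply: n2_ge0. Qed.
Lemma nv_ge0 : 0 <= nv. Proof. by apply: sumr_ge0 => e _; apply: n2_ge0. Qed.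

Lemma qC (c0 c1 : C) : (\sum_e n2 (c0 * u e + c1 * v e))%:C =
  (n2 c0)%:C * nu%:C + (n2 c1)%:C * nv%:C + c0 * c1^* * zz + c0^* * c1 * zz^*.
Proof.
rewrite /nu /nv /zz !sum4 !(rcD, rcM) !n2C !(cjD, cjM) !conjCK; ring.
Qed.

Lemma QFid (c0 c1 : C) :
  (n2 c0 + n2 c1) * (nu + nv) * (\sum_e n2 (c0 * u e + c1 * v e))
  - (\sum_e n2 (c0 * u e + c1 * v e)) ^+ 2 - gg * (n2 c0 + n2 c1) ^+ 2
  = n2 (- c0 * c1 * nu%:C + c0 ^+ 2 * zz - c1 ^+ 2 * zz^* + c0 * c1 * nv%:C).
Proof.
apply: rcI.
rewrite !(rcD, rcB, rcN, rcM, rcX) qC ?(rcB, rcN, rcM, rcD) !n2C !(cjD, cjB, cjM, cjN, cjX) !conjR !conjCK.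
ring.
Qed.

Definition sg1 : R := Num.sqrt (1 - 4 * gg).
Definition g1 : R := (1 + sg1) / 2.

Lemma gg_le (hn : nu + nv = 1) : gg <= 1 / 4.
Proof.
have h1 := nu_ge0; have h2 := nv_ge0; have h3 := n2_ge0 zz.
have h4 := sqr_ge0 (nu - nv).
rewrite /gg; nra.
Qed.
Lemma sg1_sq (hn : nu + nv = 1) : sg1 ^+ 2 = 1 - 4 * gg.
Proof. have := gg_le hn => h; rewrite /sg1 sqr_sqrtr //; lra. Qed.
Lemma sg1_ge0 : 0 <= sg1. Proof. exact: sqrtr_ge0. Qed.
Lemma g1_ge0 : 0 <= g1. Proof. have := sg1_ge0; rewrite /g1; lra. Qed.
Lemma gg_g1 (hn : nu + nv = 1) : gg = g1 * (1 - g1).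
Proof. have := sg1_sq hn; rewrite /g1 => h; nra. Qed.

Lemma QF (hn : nu + nv = 1) (c0 c1 : C) :
  \sum_e n2 (c0 * u e + c1 * v e) <= g1 * (n2 c0 + n2 c1).
Proof.
have H := QFid c0 c1; rewrite hn mulr1 in H.
move: H; set q := \sum_e _; set n := n2 c0 + n2 c1; set w := n2 _ => H.
have hw : 0 <= w by apply: n2_ge0.
have hs := sg1_sq hn; have hs0 := sg1_ge0.
have hn0 : 0 <= n by rewrite /n; apply: addr_ge0; apply: n2_ge0.
have hs' : sg1 ^+ 2 * n ^+ 2 = (1 - 4 * gg) * n ^+ 2 by rewrite hs.
have E : (q - n / 2) ^+ 2 <= (sg1 * n / 2) ^+ 2 by nra.
have hb : 0 <= sg1 * n / 2 by apply: divr_ge0 => //; apply: mulr_ge0.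
have F : q - n / 2 <= sg1 * n / 2.
  move: E hb; set a := q - n / 2; set b := sg1 * n / 2 => E hb; nra.
rewrite /g1; lra.
Qed.
End M5.

Section M6.
Variable R : rcfType.
Local Notation C := R[i].
Variables u v : 'I_4 -> C.

Lemma Sval_real : Sval (rho u v) = ((nu u + nv v) ^+ 2 + 2 * xx u v - 4 * gg u v)%:C.
Proof.
rewrite /rho (Sval_gen u (fun e => (u e)^*) v (fun e => (v e)^*)).
rewrite /xx /gg /nu /nv /zz /k11 /k12 /k22 /beta !sum4.
rewrite !(rcD, rcB, rcN, rcM, rcX) !n2C !(cjD, cjB, cjN, cjM) !conjCK.
ring.
Qed.

Lemma norm_real : \sum_e (`|u e| ^+ 2 + `|v e| ^+ 2) = 1 -> nu u + nv v = 1.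
Proof.
move=> H; apply: rcI; rewrite rcD /nu /nv !rcS -big_split /= -[(1 : R)%:C]/(1 : C) -H.
by apply: eq_bigr => e _; rewrite !n2_nr !rcX -!normE.
Qed.

Lemma key (hn : nu u + nv v = 1) : mu1 u v <= g1 u v ^+ 2.
Proof.
have hroot : root (char_poly (Nm u v)) (mu1 u v)%:C.
  by rewrite cpN_fact rootM root_XsubC eqxx.
have /eigenvalueP [w Hw wnz] : eigenvalue (Nm u v) (mu1 u v)%:C.
  by rewrite eigenvalue_root_char.
have E0 : (w *m Nm u v) 0 b0 = ((mu1 u v)%:C *: w) 0 b0 by rewrite Hw.
have E1 : (w *m Nm u v) 0 b1 = ((mu1 u v)%:C *: w) 0 b1 by rewrite Hw.
rewrite /= !mxE sum2 N00 N10 in E0.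
rewrite /= !mxE sum2 N01 N11 in E1.
move: E0 E1 wnz.
set v0 := w 0 b0; set v1 := w 0 b1.
set K11 := k11 u; set K12 := k12 u v; set K22 := k22 v.
set m := (mu1 u v)%:C.
move=> E0 E1 wnz.
set V := n2 v0 + n2 v1.
have Vpos : 0 < V.
  rewrite lt_def; apply/andP; split; last by apply: addr_ge0; apply: n2_ge0.
  apply/negP => /eqP HV; move/negP: wnz; apply; apply/eqP/rowP => j.
  have h0 : n2 v0 = 0 by have := n2_ge0 v0; have := n2_ge0 v1; rewrite /V in HV; lra.
  have h1 : n2 v1 = 0 by have := n2_ge0 v0; have := n2_ge0 v1; rewrite /V in HV; lra.
  have z0 : v0 = 0 by apply/eqP; rewrite -mul_conjC_eq0 -n2C h0.
  have z1 : v1 = 0 by apply/eqP; rewrite -mul_conjC_eq0 -n2C h1.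
  rewrite mxE; case: j => [[|[|//]] Hj].
    by rewrite -z0 /v0; congr (w _ _); apply/val_inj.
  by rewrite -z1 /v1; congr (w _ _); apply/val_inj.
pose a0 := v0 * K11^* + v1 * K12^*.
pose a1 := v0 * K12^* + v1 * K22^*.
pose r1 := fun e => a0 * u e + a1 * v e.
pose r2 := fun e => v0^* * u e + v1^* * v e.
pose s2 := fun e : 'I_4 => if val e == 0%N then - r2 o3 else if val e == 1%N then r2 o2
   else if val e == 2%N then r2 o1 else - r2 o0.
have I1 : \sum_e r1 e * s2 e = (mu1 u v * V)%:C.
  have -> : \sum_e r1 e * s2 e =
     v0^* * (v0 * (K11^* * K11 + K12^* * K12) + v1 * (K12^* * K11 + K22^* * K12)) +
     v1^* * (v0 * (K11^* * K12 + K12^* * K22) + v1 * (K12^* * K12 + K22^* * K22)).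
    rewrite sum4 /s2 /= /r1 /r2 /a0 /a1 /K11 /K12 /K22 /k11 /k12 /k22 /beta; ring.
  rewrite E0 E1 rcM /V rcD !n2C; ring.
have a0J : a0^* = v0^* * K11 + v1^* * K12 by rewrite /a0 cjD cjM cjM !conjCK.
have a1J : a1^* = v0^* * K12 + v1^* * K22 by rewrite /a1 cjD cjM cjM !conjCK.
have I2 : n2 a0 + n2 a1 = mu1 u v * V.
  apply: rcI; rewrite rcD !n2C a0J a1J.
  have -> : a0 * (v0^* * K11 + v1^* * K12) + a1 * (v0^* * K12 + v1^* * K22) =
     v0^* * (v0 * (K11^* * K11 + K12^* * K12) + v1 * (K12^* * K11 + K22^* * K12)) +
     v1^* * (v0 * (K11^* * K12 + K12^* * K22) + v1 * (K12^* * K12 + K22^* * K22)).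
    rewrite /a0 /a1; ring.
  rewrite E0 E1 rcM /V rcD !n2C; ring.
have CSa := CS r1 s2.
have Hs2 : \sum_e n2 (s2 e) = \sum_e n2 (r2 e).
  by rewrite !sum4 /s2 /= !n2N; ring.
have Q1 := QF hn a0 a1.
have Q2 := QF hn v0^* v1^*.
rewrite !n2J -/V in Q2.
rewrite I2 in Q1.
rewrite I1 n2R Hs2 in CSa.
have hQ1 : 0 <= \sum_e n2 (a0 * u e + a1 * v e) by apply: sumr_ge0 => e _; apply: n2_ge0.
have hQ2 : 0 <= \sum_e n2 (v0^* * u e + v1^* * v e) by apply: sumr_ge0 => e _; apply: n2_ge0.
move: CSa Q1 Q2 hQ1 hQ2.
rewrite /r1 /r2.
set Q1 := \sum_e n2 (a0 * u e + a1 * v e).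
set Q2 := \sum_e n2 (v0^* * u e + v1^* * v e).
move=> CSa Q1le Q2le hQ1 hQ2.
have hm := mu1_ge0 u v; have hg := g1_ge0 u v.
have P : Q1 * Q2 <= (g1 u v * (mu1 u v * V)) * (g1 u v * V).
  by apply: ler_pM.
have P2 : mu1 u v * (mu1 u v * V ^+ 2) <= mu1 u v * (g1 u v ^+ 2 * V ^+ 2) by nra.
have [m0|mpos] := eqVneq (mu1 u v) 0.
  by rewrite m0 sqr_ge0.
have mp : 0 < mu1 u v by rewrite lt_def mpos hm.
rewrite ler_pM2l // in P2.
by rewrite -(ler_pM2r (exprn_gt0 2 Vpos)).
Qed.
End M6.


Theorem theorem3 (R : rcfType) (psi : three_qubit_state R) (i j : 'I_3) :
  normalized psi -> i != j ->
  4 / 9 < concurrence (reduced psi i j) ^+ 2 ->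
  1 < Sval (reduced psi i j).
Proof.
move=> hnorm hij hc.
have hn := norm_real (normalized_uv hij hnorm).
have E : reduced psi i j = rho (uu psi i j) (vv psi i j) by rewrite (reduced_uv psi hij).
rewrite E in hc *.
move: hn hc; set u := uu psi i j; set v := vv psi i j => hn hc.
rewrite conc_eq in hc.
rewrite Sval_real hn.
rewrite -[1 : R[i]]/((1 : R)%:C) ltcR.
have hk := key hn.
have hm1 := mu1_ge0 u v; have hm2 := mu2_ge0 u v.
have hs := mu_sum u v.
have hg := gg_g1 hn; have hg1 := g1_ge0 u v.
set s := Num.sqrt (mu1 u v) in hc.
set t := Num.sqrt (mu2 u v) in hc.
have hs0 : 0 <= s := sqrtr_ge0 _.
have ht0 : 0 <= t := sqrtr_ge0 _.
have hss : s ^+ 2 = mu1 u v by rewrite /s sqr_sqrtr.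
have hc0 : 0 <= Num.max 0 (s - t) by rewrite le_max lexx.
have hc2 : 2 / 3 < Num.max 0 (s - t).
  move: hc hc0; set c := Num.max _ _ => hc hc0; nra.
rewrite lt_max in hc2; case/orP: hc2 => [|hc2]; first by lra.
have hs23 : 2 / 3 < s by lra.
have hsg : s <= g1 u v.
  move: hk; rewrite -hss => hk; nra.
have P : 0 <= (g1 u v - s) * (g1 u v + s - 1) by apply: mulr_ge0; lra.
have P2 : 0 < s * (3 * s - 2) by apply: mulr_gt0; lra.
move: hs hg P P2; set X := xx u v; set G := gg u v; set g := g1 u v => hs hg P P2.
rewrite expr1n.
have : G <= s - s ^+ 2 by rewrite hg; nra.
nra.
Qed.
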